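(* Let $B$, $B_u$ be solutions on $[0,T]$ of the constrained and unconstrained ODEs of the context, and let $\pi^\ast,\hat\pi^\ast,\pi_u,\pi_M$ be as in the context. (i) If $0<\pi_M=\frac\alpha2<\alpha$ and $\alpha<\pi_u(t^\ast)<\beta$ for some $t^\ast\in[0,T]$, then $B(\tau)=0$ for all $\tau\in[0,T]$, $\pi^\ast(t)=\alpha$ for all $t\in[0,T]$, and the functions $\pi^\ast$ and $t\mapsto\mathrm{Cap}(\pi_u(t),\alpha,\beta)$ on $[0,T]$ are not identical. (ii) If $\pi_M>\beta>0$, then $\mathrm{sign}(\frac{\partial}{\partial t}\hat\pi^\ast(t))=\mathrm{sign}(\frac{\partial}{\partial t}\pi_u(t))=-\mathrm{sign}(\rho b)$ for all $t\in[0,T]$. Hence, if in addition $b<0$ and $\rho<0$, then $\pi^\ast(t)=\mathrm{Cap}(\pi_u(t),\alpha,\beta)$ for all $t\in[0,T]$.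
   Context: Parameters: $T>0$; $\eta,\kappa,\sigma>0$; $\rho\in(-1,1)$; $b<1$, $b\ne0$; $K=[\alpha,\beta]$, $-\infty\le\alpha<\beta\le\infty$; $\delta_K(x)=-\alpha x\mathbf 1_{\{x>0\}}-\beta x\mathbf 1_{\{x<0\}}$. $B_-=\frac{(1-b)\alpha-\eta}\sigma$, $B_+=\frac{(1-b)\beta-\eta}\sigma$; $r_0=-\frac b{2(1-b)}\eta^2$, $r_1=\frac b{1-b}\eta\sigma\rho-\kappa$, $r_2=\sigma^2(1+\frac b{1-b}\rho^2)$. Constrained ODE: $B'(\tau)=-\kappa B+\frac12\sigma^2B^2+\frac12\frac b{1-b}\inf_{\lambda\in\mathbb R}(2(1-b)\delta_K(\lambda)+(\eta+\lambda+\sigma\rho B)^2)$, $B(0)=0$. Unconstrained ODE: $B_u'(\tau)=-r_0+r_1B_u+\frac12r_2B_u^2$, $B_u(0)=0$. $\lambda^\ast(B)=[(1-b)\alpha-(\eta+\sigma\rho B)]\mathbf 1_{\{\rho B<B_-\}}+[(1-b)\beta-(\eta+\sigma\rho B)]\mathbf 1_{\{\rho B>B_+\}}$; $\pi^\ast(t)=\frac1{1-b}(\eta+\lambda^\ast(B(T-t))+\sigma\rho B(T-t))$; $\hat\pi^\ast(t)=\frac1{1-b}(\eta+\sigma\rho B(T-t))$; $\pi_u(t)=\frac1{1-b}(\eta+\sigma\rho B_u(T-t))$; $\pi_M=\frac\eta{1-b}$; $\mathrm{Cap}(x,\alpha,\beta)=\alpha$ if $x<\alpha$, $x$ if $\alpha\le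 x\le\beta$, $\beta$ if $x>\beta$; $\mathrm{sign}(x)\in\{-1,0,1\}$. *)

(* Defs.v *)
From Stdlib Require Import Reals.
From Coquelicot Require Import Coquelicot.
Open Scope R_scope.

(* K = [alpha, beta] with alpha, beta in the extended reals (Rbar).
   delta_K x = -alpha x 1_{x>0} - beta x 1_{x<0}, with the convention
   that a term whose indicator vanishes is 0; may be +infinity. *)
Definition deltaK (alpha beta : Rbar) (x : R) : Rbar :=
  if Rlt_dec 0 x then Rbar_opp (Rbar_mult alpha (Finite x))
  else if Rlt_dec x 0 then Rbar_opp (Rbar_mult beta (Finite x))
  else Finite 0.

Definition inf_term (eta sigma rho b : R) (alpha beta : Rbar) (B : R) : Rbar :=
  Rbar_glb (fun y : Rbar => exists l : R,
    y = Rbar_plus (Rbar_mult (Finite (2 * (1 - b))) (deltaK alpha beta l))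
                  (Finite ((eta + l + sigma * rho * B) ^ 2))).

(* right-hand side of the constrained ODE B' = F(B).  The infimum is finite
   (it is at most its value at lambda = 0), so [real] loses nothing. *)
Definition F_con (eta kappa sigma rho b : R) (alpha beta : Rbar) (B : R) : R :=
  - kappa * B + / 2 * sigma ^ 2 * B ^ 2
  + / 2 * (b / (1 - b)) * real (inf_term eta sigma rho b alpha beta B).

Definition r0 (eta b : R) : R := - (b / (2 * (1 - b))) * eta ^ 2.
Definition r1 (eta kappa sigma rho b : R) : R := b / (1 - b) * eta * sigma * rho - kappa.
Definition r2 (sigma rho b : R) : R := sigma ^ 2 * (1 + b / (1 - b) * rho ^ 2).

Definition F_unc (eta kappa sigma rho b : R) (Bu : R) : R :=
  - r0 eta b + r1 eta kappa sigma rho b * Bu + / 2 * r2 sigma rho b * Bu ^ 2.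

Definition Bminus (eta sigma b : R) (alpha : Rbar) : Rbar :=
  Rbar_mult (Finite (/ sigma)) (Rbar_minus (Rbar_mult (Finite (1 - b)) alpha) (Finite eta)).
Definition Bplus (eta sigma b : R) (beta : Rbar) : Rbar :=
  Rbar_mult (Finite (/ sigma)) (Rbar_minus (Rbar_mult (Finite (1 - b)) beta) (Finite eta)).

(* lambda^*(B); in the first (resp. second) branch alpha (resp. beta) is
   necessarily finite, so [real alpha] (resp. [real beta]) is its value. *)
Definition lambda_star (eta sigma rho b : R) (alpha beta : Rbar) (B : R) : R :=
  if Rbar_lt_dec (Finite (rho * B)) (Bminus eta sigma b alpha)
  then (1 - b) * real alpha - (eta + sigma * rho * B)
  else if Rbar_lt_dec (Bplus eta sigma b beta) (Finite (rho * B))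
  then (1 - b) * real beta - (eta + sigma * rho * B)
  else 0.

Definition pi_star (T eta sigma rho b : R) (alpha beta : Rbar) (B : R -> R) (t : R) : R :=
  / (1 - b) * (eta + lambda_star eta sigma rho b alpha beta (B (T - t))
               + sigma * rho * B (T - t)).

Definition pi_hat (T eta sigma rho b : R) (B : R -> R) (t : R) : R :=
  / (1 - b) * (eta + sigma * rho * B (T - t)).

Definition pi_u (T eta sigma rho b : R) (Bu : R -> R) (t : R) : R :=
  / (1 - b) * (eta + sigma * rho * Bu (T - t)).

Definition pi_M (eta b : R) : R := eta / (1 - b).

Definition Cap (x : R) (alpha beta : Rbar) : Rbar :=
  if Rbar_lt_dec (Finite x) alpha then alpha
  else if Rbar_lt_dec beta (Finite x) then beta
  else Finite x.

(* Main.v *)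
Require Import Defs.
From Stdlib Require Import Reals Lra Psatz.
From Coquelicot Require Import Coquelicot.
Open Scope R_scope.


Definition D2 (q : R) (alpha beta : Rbar) (l : R) : Rbar :=
  Rbar_mult (Finite (2 * q)) (deltaK alpha beta l).

Lemma Rbar_mult_pos_pinf (x : R) : 0 < x -> Rbar_mult (Finite x) p_infty = p_infty.
Proof. intros H. unfold Rbar_mult, Rbar_mult'; destruct (Rle_dec 0 x) as [r|r]; [destruct (Rle_lt_or_eq_dec 0 x r)|]; simpl; try lra; reflexivity. Qed.
Lemma Rbar_mult_pos_minf (x : R) : 0 < x -> Rbar_mult (Finite x) m_infty = m_infty.
Proof. intros H. unfold Rbar_mult, Rbar_mult'; destruct (Rle_dec 0 x) as [r|r]; [destruct (Rle_lt_or_eq_dec 0 x r)|]; simpl; try lra; reflexivity. Qed.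
Lemma Rbar_mult_minf_pos (x : R) : 0 < x -> Rbar_mult m_infty (Finite x) = m_infty.
Proof. intros H. unfold Rbar_mult, Rbar_mult'; destruct (Rle_dec 0 x) as [r|r]; [destruct (Rle_lt_or_eq_dec 0 x r)|]; simpl; try lra; reflexivity. Qed.
Lemma Rbar_mult_pinf_neg (x : R) : x < 0 -> Rbar_mult p_infty (Finite x) = m_infty.
Proof. intros H. unfold Rbar_mult, Rbar_mult'; destruct (Rle_dec 0 x) as [r|r]; [destruct (Rle_lt_or_eq_dec 0 x r)|]; simpl; try lra; reflexivity. Qed.
Lemma Rbar_mult_minf_neg (x : R) : x < 0 -> Rbar_mult m_infty (Finite x) = p_infty.
Proof. intros H. unfold Rbar_mult, Rbar_mult'; destruct (Rle_dec 0 x) as [r|r]; [destruct (Rle_lt_or_eq_dec 0 x r)|]; simpl; try lra; reflexivity. Qed.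
Lemma Rbar_mult_pinf_pos (x : R) : 0 < x -> Rbar_mult p_infty (Finite x) = p_infty.
Proof. intros H. unfold Rbar_mult, Rbar_mult'; destruct (Rle_dec 0 x) as [r|r]; [destruct (Rle_lt_or_eq_dec 0 x r)|]; simpl; try lra; reflexivity. Qed.

Definition P (q : R) (alpha beta : Rbar) (c : R) : R :=
  if Rbar_lt_dec (Finite (c / q)) alpha then q * real alpha
  else if Rbar_lt_dec beta (Finite (c / q)) then q * real beta
  else c.

Definition Hv (q : R) (alpha beta : Rbar) (c : R) : R :=
  2 * P q alpha beta c * c - (P q alpha beta c) ^ 2.

Lemma P_cases q alpha beta c : 0 < q -> Rbar_lt alpha beta ->
  (exists a, alpha = Finite a /\ c < q * a /\ P q alpha beta c = q * a) \/
  (exists bb, beta = Finite bb /\ q * bb < c /\ P q alpha beta c = q * bb) \/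
  (Rbar_le alpha (Finite (c / q)) /\ Rbar_le (Finite (c/q)) beta /\ P q alpha beta c = c).
Proof.
  intros Hq Hab. unfold P.
  destruct (Rbar_lt_dec (Finite (c / q)) alpha) as [h1|h1].
  - left. destruct alpha as [a| |]; simpl in *; try tauto.
    exists a; split; auto. split; auto.
    apply Rmult_lt_compat_l with (r := q) in h1; auto.
    field_simplify in h1; lra.
  - destruct (Rbar_lt_dec beta (Finite (c / q))) as [h2|h2].
    + right; left. destruct beta as [bb| |]; simpl in *; try tauto;
      try (destruct alpha; simpl in *; tauto).
      exists bb; split; auto. split; auto.
      apply Rmult_lt_compat_l with (r := q) in h2; auto.
      field_simplify in h2; lra.
    + right; right. split; [now apply Rbar_not_lt_le|]. split; [now apply Rbar_not_lt_le|]. auto.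
Qed.

Lemma P_ge q alpha beta c a : 0 < q -> Rbar_lt alpha beta -> alpha = Finite a -> q * a <= P q alpha beta c.
Proof.
  intros Hq Hab Ha. destruct (P_cases q alpha beta c Hq Hab) as [[a' [h1 [h2 h3]]]|[[bb [h1 [h2 h3]]]|[h1 [h2 h3]]]].
  - rewrite Ha in h1; injection h1; intros; subst; lra.
  - rewrite h3. subst. simpl in Hab. nra.
  - rewrite h3. subst. simpl in h1. apply Rmult_le_compat_l with (r := q) in h1; [|lra].
    field_simplify in h1; lra.
Qed.

Lemma P_le q alpha beta c bb : 0 < q -> Rbar_lt alpha beta -> beta = Finite bb -> P q alpha beta c <= q * bb.
Proof.
  intros Hq Hab Hb. destruct (P_cases q alpha beta c Hq Hab) as [[a' [h1 [h2 h3]]]|[[bb' [h1 [h2 h3]]]|[h1 [h2 h3]]]].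
  - rewrite h3. subst. simpl in Hab. nra.
  - rewrite Hb in h1; injection h1; intros; subst; lra.
  - rewrite h3. subst. simpl in h2. apply Rmult_le_compat_l with (r := q) in h2; [|lra].
    field_simplify in h2; lra.
Qed.

Lemma var_ineq q alpha beta c l : 0 < q -> Rbar_lt alpha beta ->
  Rbar_le (Finite (Hv q alpha beta c)) (Rbar_plus (D2 q alpha beta l) (Finite ((c + l) ^ 2))).
Proof.
  intros Hq Hab. unfold D2, deltaK, Hv.
  pose proof (fun a => P_ge q alpha beta c a Hq Hab) as Hge.
  pose proof (fun bb => P_le q alpha beta c bb Hq Hab) as Hle.
  set (p := P q alpha beta c) in *. clearbody p.
  destruct (Rlt_dec 0 l) as [hl|hl].
  - destruct alpha as [a| |].
    + assert (q * a <= p) by (apply Hge; auto).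
      simpl. assert (0 <= (c + l - p)^2) by apply pow2_ge_0. assert (0 <= l*(p-q*a)) by (apply Rmult_le_pos; lra). nra.
    + simpl in Hab; tauto.
    + rewrite Rbar_mult_minf_pos by lra. simpl Rbar_opp.
      rewrite Rbar_mult_pos_pinf by lra. simpl. exact I.
  - destruct (Rlt_dec l 0) as [hl2|hl2].
    + destruct beta as [bb| |].
      * assert (p <= q * bb) by (apply Hle; auto).
        simpl. assert (0 <= (c + l - p)^2) by apply pow2_ge_0. assert (0 <= (-l)*(q*bb-p)) by (apply Rmult_le_pos; lra). nra.
      * rewrite Rbar_mult_pinf_neg by lra. simpl Rbar_opp.
        rewrite Rbar_mult_pos_pinf by lra. simpl. exact I.
      * destruct alpha; simpl in Hab; tauto.
    + assert (l = 0) by lra. subst l. simpl. assert (0 <= (c - p)^2) by apply pow2_ge_0. nra.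
Qed.

Lemma attain q alpha beta c : 0 < q -> Rbar_lt alpha beta ->
  D2 q alpha beta (P q alpha beta c - c) = Finite (- 2 * P q alpha beta c * (P q alpha beta c - c)).
Proof.
  intros Hq Hab. unfold D2, deltaK.
  destruct (P_cases q alpha beta c Hq Hab) as [[a [h1 [h2 h3]]]|[[bb [h1 [h2 h3]]]|[h1 [h2 h3]]]];
  rewrite h3.
  - destruct (Rlt_dec 0 (q * a - c)); [|lra]. rewrite h1. simpl. f_equal. ring.
  - destruct (Rlt_dec 0 (q * bb - c)); [lra|]. destruct (Rlt_dec (q * bb - c) 0); [|lra].
    rewrite h1. simpl. f_equal. ring.
  - replace (c - c) with 0 by ring. destruct (Rlt_dec 0 0); [lra|]. destruct (Rlt_dec 0 0); [lra|].
    simpl. f_equal. ring.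
Qed.


Definition loclip (F : R -> R) : Prop :=
  forall M, exists L, 0 <= L /\ forall x y, Rabs x <= M -> Rabs y <= M -> Rabs (F y - F x) <= L * Rabs (y - x).

Lemma loclip_cont F x : loclip F -> continuity_pt F x.
Proof.
  intros HF. destruct (HF (Rabs x + 1)) as [L [HL0 HL]].
  unfold continuity_pt, continue_in, limit1_in, limit_in. intros eps Heps.
  exists (Rmin 1 (eps / (L + 1))). split.
  - apply Rmin_pos; [lra|]. apply Rdiv_lt_0_compat; lra.
  - intros y [_ Hy]. simpl in *. unfold Rdist in *.
    assert (h1 : Rabs (y - x) < 1) by (eapply Rlt_le_trans; [exact Hy| apply Rmin_l]).
    assert (h2 : Rabs (y - x) < eps / (L+1)) by (eapply Rlt_le_trans; [exact Hy| apply Rmin_r]).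
    assert (hy : Rabs y <= Rabs x + 1).
    { replace y with (x + (y - x)) by ring. eapply Rle_trans; [apply Rabs_triang|]. lra. }
    specialize (HL x y ltac:(lra) hy).
    assert (L * Rabs (y - x) <= (L+1) * Rabs (y-x)) by (pose proof (Rabs_pos (y-x)); nra).
    assert ((L+1) * Rabs (y - x) < eps).
    { apply Rmult_lt_compat_l with (r := L+1) in h2; [|lra].
      field_simplify in h2; lra. }
    lra.
Qed.

Lemma deriv_cont (B : R -> R) t d : is_derive B t d -> continuity_pt B t.
Proof.
  intros H. apply continuity_pt_filterlim. apply (@ex_derive_continuous R_AbsRing R_NormedModule B t). exists d; exact H.
Qed.

Lemma bounded_on (B : R -> R) T (G : R -> R) : 0 <= T ->
  (forall tau, 0 <= tau <= T -> is_derive B tau (G tau)) ->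
  exists M, 0 <= M /\ forall tau, 0 <= tau <= T -> Rabs (B tau) <= M.
Proof.
  intros HT HB.
  destruct (continuity_ab_maj (fun t => Rabs (B t)) 0 T HT) as [m [Hm _]].
  { intros c Hc. apply (continuity_pt_comp B Rabs). eapply deriv_cont; apply HB; auto.
    apply Rcontinuity_abs. }
  exists (Rabs (B m)). split; [apply Rabs_pos|]. auto.
Qed.

Lemma w_mvt (B : R -> R) T (G : R -> R) x0 k t1 t2 :
  (forall tau, 0 <= tau <= T -> is_derive B tau (G tau)) ->
  0 <= t1 -> t1 <= t2 -> t2 <= T ->
  exists c, t1 <= c <= t2 /\
   (B t2 - x0)^2 * exp (k * t2) - (B t1 - x0)^2 * exp (k * t1)
   = ((2 * (B c - x0) * G c + k * (B c - x0)^2) * exp (k * c)) * (t2 - t1).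
Proof.
  intros HB h1 h12 h2.
  assert (Hd : forall t, 0 <= t <= T -> is_derive (fun t => (B t - x0)^2 * exp (k * t)) t
     ((2 * (B t - x0) * G t + k * (B t - x0)^2) * exp (k * t))).
  { intros t Ht. pose proof (HB t Ht) as Hbt.
    assert (Hex : ex_derive B t) by (exists (G t); auto).
    auto_derive; auto. replace (Derive (fun x : R => B x) t) with (G t) by (symmetry; apply is_derive_unique; exact Hbt). ring. }
  destruct (MVT_gen (fun t => (B t - x0)^2 * exp (k * t)) t1 t2
     (fun t => (2 * (B t - x0) * G t + k * (B t - x0)^2) * exp (k * t))) as [c [Hc Heq]].
  - rewrite Rmin_left, Rmax_right by lra. intros x Hx. apply Hd. lra.
  - rewrite Rmin_left, Rmax_right by lra. intros x Hx. eapply deriv_cont. apply Hd. lra.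
  - rewrite Rmin_left, Rmax_right in Hc by lra. exists c. split; auto.
Qed.

Lemma gronwall (B F : R -> R) T s x0 :
  0 <= T -> loclip F ->
  (forall tau, 0 <= tau <= T -> is_derive B tau (F (B tau))) ->
  0 <= s <= T -> B s = x0 -> F x0 = 0 ->
  forall tau, 0 <= tau <= T -> B tau = x0.
Proof.
  intros HT HF HB Hs HBs HF0.
  destruct (bounded_on B T (fun t => F (B t)) HT HB) as [M [HM0 HM]].
  destruct (HF (Rmax M (Rabs x0))) as [L [HL0 HL]].
  assert (Hlip : forall t, 0 <= t <= T -> Rabs (F (B t)) <= L * Rabs (B t - x0)).
  { intros t Ht. rewrite <- (Rminus_0_r (F (B t))), <- HF0. apply HL.
    apply Rmax_r. eapply Rle_trans; [apply HM; auto| apply Rmax_l]. }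
  assert (Hkey : forall t, 0 <= t <= T -> forall k : R, 
     2 * (B t - x0) * F (B t) <= 2 * L * (B t - x0)^2 /\ - (2 * L * (B t - x0)^2) <= 2 * (B t - x0) * F (B t)).
  { intros t Ht k. specialize (Hlip t Ht).
    assert (Rabs ((B t - x0) * F (B t)) <= L * (B t - x0)^2).
    { rewrite Rabs_mult. replace ((B t - x0)^2) with (Rabs (B t - x0) * Rabs (B t - x0)).
      2:{ rewrite <- Rabs_mult, Rabs_pos_eq; [ring| apply Rle_0_sqr]. }
      pose proof (Rabs_pos (B t - x0)). nra. }
    apply Rabs_le_between in H. lra. }
  intros tau Htau.
  assert (Hw : (B tau - x0)^2 <= 0).
  { destruct (Rle_lt_dec s tau) as [Hst|Hst].
    - destruct (w_mvt B T (fun t => F (B t)) x0 (-2 * L) s tau HB ltac:(lra) Hst ltac:(lra)) as [c [Hc Heq]].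
      rewrite HBs in Heq. replace ((x0 - x0)^2) with 0 in Heq by ring.
      destruct (Hkey c ltac:(lra) 0) as [k1 k2].
      assert (((2 * (B c - x0) * F (B c) + -2 * L * (B c - x0)^2) * exp (-2 * L * c)) * (tau - s) <= 0).
      { apply Rmult_le_0_r; [|lra]. apply Rmult_le_0_r; [lra|]. apply Rlt_le, exp_pos. }
      assert (Hexp := exp_pos (-2 * L * tau)).
      assert ((B tau - x0)^2 * exp (-2 * L * tau) <= 0) by lra.
      nra.
    - destruct (w_mvt B T (fun t => F (B t)) x0 (2 * L) tau s HB ltac:(lra) ltac:(lra) ltac:(lra)) as [c [Hc Heq]].
      rewrite HBs in Heq. replace ((x0 - x0)^2) with 0 in Heq by ring.
      destruct (Hkey c ltac:(lra) 0) as [k1 k2].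
      assert (0 <= ((2 * (B c - x0) * F (B c) + 2 * L * (B c - x0)^2) * exp (2 * L * c)) * (s - tau)).
      { apply Rmult_le_pos; [|lra]. apply Rmult_le_pos; [lra|]. apply Rlt_le, exp_pos. }
      assert (Hexp := exp_pos (2 * L * tau)).
      assert ((B tau - x0)^2 * exp (2 * L * tau) <= 0) by lra.
      nra. }
  assert (B tau - x0 = 0) by nra. lra.
Qed.

Lemma sign_keep (B F : R -> R) T :
  0 <= T -> loclip F ->
  (forall tau, 0 <= tau <= T -> is_derive B tau (F (B tau))) ->
  B 0 = 0 -> F 0 <> 0 ->
  forall tau, 0 <= tau <= T -> 0 < F (B tau) * F 0.
Proof.
  intros HT HF HB HB0 HF0 tau Htau.
  assert (Hnz : forall t, 0 <= t <= T -> F (B t) <> 0).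
  { intros t Ht Hz. pose proof (gronwall B F T t (B t) HT HF HB Ht eq_refl Hz 0 ltac:(lra)).
    rewrite HB0 in H. rewrite <- H in Hz. auto. }
  destruct (Rlt_le_dec 0 (F (B tau) * F 0)) as [h|h]; auto. exfalso.
  assert (Hc : forall t, 0 <= t <= T -> continuity_pt (fun t => F (B t)) t).
  { intros t Ht. apply (continuity_pt_comp B F). eapply deriv_cont; apply HB; auto.
    apply loclip_cont; auto. }
  assert (Htau0 : 0 < tau).
  { destruct (Rle_lt_or_eq_dec 0 tau (proj1 Htau)) as [h'|h']; auto. subst tau. rewrite HB0 in h. nra. }
  assert (HFt := Hnz tau Htau).
  destruct (Rlt_le_dec 0 (F 0)) as [hp|hn].
  - assert (F (B tau) < 0).
    { destruct (Rlt_le_dec (F (B tau)) 0); auto. nra. }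
    destruct (Ranalysis5.IVT_interv (fun t => - F (B t)) 0 tau) as [z [Hz Hz0]].
    + intros a Ha. apply continuity_pt_opp. apply Hc. lra.
    + auto.
    + rewrite HB0. lra.
    + lra.
    + apply (Hnz z); [lra|]. lra.
  - assert (F 0 < 0) by lra.
    assert (0 < F (B tau)).
    { destruct (Rlt_le_dec 0 (F (B tau))); auto. nra. }
    destruct (Ranalysis5.IVT_interv (fun t => F (B t)) 0 tau) as [z [Hz Hz0]].
    + intros a Ha. apply Hc. lra.
    + auto.
    + rewrite HB0. lra.
    + lra.
    + apply (Hnz z); [lra|]. lra.
Qed.


Lemma inf_term_eq eta sigma rho b alpha beta x : b < 1 -> Rbar_lt alpha beta ->
  inf_term eta sigma rho b alpha beta x = Finite (Hv (1 - b) alpha beta (eta + sigma * rho * x)).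
Proof.
  intros Hb Hab. set (c := eta + sigma * rho * x). set (q := 1 - b).
  assert (Hq : 0 < q) by (unfold q; lra).
  unfold inf_term. apply Rbar_is_glb_unique. split.
  - intros y [l ->]. replace (eta + l + sigma * rho * x) with (c + l) by (unfold c; ring).
    apply (var_ineq q alpha beta c l Hq Hab).
  - intros m Hm. set (l := P q alpha beta c - c).
    specialize (Hm (Rbar_plus (D2 q alpha beta l) (Finite ((eta + l + sigma * rho * x)^2)))
      (ex_intro _ l eq_refl)).
    unfold l in Hm. rewrite (attain q alpha beta c Hq Hab) in Hm. simpl in Hm.
    assert (E : (- 2 * P q alpha beta c * (P q alpha beta c - c) +
        (eta + (P q alpha beta c - c) + sigma * rho * x) ^ 2)%R = Hv q alpha beta c) by (unfold Hv, c; ring).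
    rewrite <- E. simpl. exact Hm.
Qed.

Lemma H_up q alpha beta c d : 0 < q -> Rbar_lt alpha beta ->
  Hv q alpha beta d - Hv q alpha beta c <= (d - c) * (d - c + 2 * P q alpha beta c).
Proof.
  intros Hq Hab. pose proof (var_ineq q alpha beta d (P q alpha beta c - c) Hq Hab) as HV0.
  rewrite (attain q alpha beta c Hq Hab) in HV0. simpl in HV0.
  unfold Hv at 2. nra.
Qed.

Lemma P_bound q alpha beta c : 0 < q -> Rbar_lt alpha beta ->
  Rabs (P q alpha beta c) <= Rabs c + q * (Rabs (real alpha) + Rabs (real beta)).
Proof.
  intros Hq Hab. pose proof (Rabs_pos (real alpha)). pose proof (Rabs_pos (real beta)).
  pose proof (Rabs_pos c).
  destruct (P_cases q alpha beta c Hq Hab) as [[a [h1 [h2 h3]]]|[[bb [h1 [h2 h3]]]|[h1 [h2 h3]]]];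
  rewrite h3.
  - rewrite h1 in *. simpl in *. rewrite Rabs_mult, (Rabs_pos_eq q) by lra. nra.
  - rewrite h1 in *. simpl in *. rewrite Rabs_mult, (Rabs_pos_eq q) by lra. nra.
  - nra.
Qed.

Lemma abs_prod_le x y : x * y <= Rabs x * Rabs y.
Proof. rewrite <- Rabs_mult. apply Rle_abs. Qed.

Lemma H_lip q alpha beta c d : 0 < q -> Rbar_lt alpha beta ->
  Rabs (Hv q alpha beta d - Hv q alpha beta c) <=
  Rabs (d - c) * (Rabs (d - c) + 2 * (Rabs c + Rabs d + q * (Rabs (real alpha) + Rabs (real beta)))).
Proof.
  intros Hq Hab.
  pose proof (H_up q alpha beta c d Hq Hab) as U1.
  pose proof (H_up q alpha beta d c Hq Hab) as U2.
  pose proof (P_bound q alpha beta c Hq Hab) as P1.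
  pose proof (P_bound q alpha beta d Hq Hab) as P2.
  set (K0 := q * (Rabs (real alpha) + Rabs (real beta))) in *.
  pose proof (abs_prod_le (d - c) (d - c + 2 * P q alpha beta c)) as A1.
  pose proof (abs_prod_le (c - d) (c - d + 2 * P q alpha beta d)) as A2.
  rewrite Rabs_minus_sym in A2.
  pose proof (Rabs_triang (d - c) (2 * P q alpha beta c)) as T1.
  pose proof (Rabs_triang (c - d) (2 * P q alpha beta d)) as T2.
  rewrite Rabs_minus_sym in T2.
  rewrite Rabs_mult, (Rabs_pos_eq 2) in T1, T2 by lra.
  pose proof (Rabs_pos (d - c)). pose proof (Rabs_pos c). pose proof (Rabs_pos d).
  apply Rabs_le. split; nra.
Qed.

Ltac cb := repeat match goal with x := _ |- _ => clearbody x end.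

Lemma F_con_eq eta kappa sigma rho b alpha beta x : b < 1 -> Rbar_lt alpha beta ->
  F_con eta kappa sigma rho b alpha beta x =
  - kappa * x + / 2 * sigma ^ 2 * x ^ 2 + / 2 * (b / (1 - b)) * Hv (1 - b) alpha beta (eta + sigma * rho * x).
Proof. intros Hb Hab. unfold F_con. rewrite inf_term_eq by auto. reflexivity. Qed.

Lemma abs_sum_bound x y M : Rabs x <= M -> Rabs y <= M -> Rabs (x + y) <= 2 * M.
Proof. intros. pose proof (Rabs_triang x y). (cb; lra). Qed.

Lemma loclip_unc eta kappa sigma rho b : loclip (F_unc eta kappa sigma rho b).
Proof.
  intros M. set (a1 := r1 eta kappa sigma rho b). set (a2 := r2 sigma rho b).
  exists (Rabs a1 + Rabs a2 * Rabs M).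
  pose proof (Rabs_pos a1). pose proof (Rabs_pos a2). pose proof (Rabs_pos M).
  split. { (cb; nra). }
  intros x y Hx Hy.
  replace (F_unc eta kappa sigma rho b y - F_unc eta kappa sigma rho b x)
    with ((y - x) * (a1 + / 2 * a2 * (x + y))) by (unfold F_unc, a1, a2; ring).
  rewrite Rabs_mult, (Rmult_comm (Rabs (y - x))). apply Rmult_le_compat_r; [apply Rabs_pos|].
  eapply Rle_trans; [apply Rabs_triang|]. apply Rplus_le_compat_l.
  rewrite !Rabs_mult. rewrite (Rabs_pos_eq (/2)) by (cb; lra).
  pose proof (abs_sum_bound x y M Hx Hy). pose proof (Rle_abs M).
  pose proof (Rabs_pos (x + y)). (cb; nra).
Qed.

Lemma loclip_con eta kappa sigma rho b alpha beta : b < 1 -> Rbar_lt alpha beta ->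
  loclip (F_con eta kappa sigma rho b alpha beta).
Proof.
  intros Hb Hab M. set (q := 1 - b). assert (Hq : 0 < q) by (unfold q; (cb; lra)).
  set (s := sigma * rho). set (k := / 2 * (b / (1 - b))).
  set (K0 := q * (Rabs (real alpha) + Rabs (real beta))).
  set (M' := Rabs M).
  pose proof (Rabs_pos M) as hM. pose proof (Rabs_pos s) as hs. pose proof (Rabs_pos k) as hk. pose proof (Rabs_pos kappa) as hka.
  pose proof (Rabs_pos eta) as het.
  assert (HK0 : 0 <= K0) by (unfold K0; pose proof (Rabs_pos (real alpha)); pose proof (Rabs_pos (real beta)); (cb; nra)).
  exists (Rabs kappa + sigma ^ 2 * M' + Rabs k * (Rabs s * (6 * Rabs s * M' + 4 * Rabs eta + 2 * K0))).
  split. { assert (h4 : 0 <= sigma ^2) by apply pow2_ge_0. unfold M'.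
    pose proof (Rmult_le_pos _ _ h4 (Rabs_pos M)).
    pose proof (Rmult_le_pos _ _ (Rabs_pos s) (Rabs_pos M)).
    assert (h5 : 0 <= 6 * Rabs s * Rabs M + 4 * Rabs eta + 2 * K0) by (cb; lra).
    pose proof (Rmult_le_pos _ _ (Rabs_pos k) (Rmult_le_pos _ _ (Rabs_pos s) h5)).
    (cb; lra). }
  intros x y Hx Hy.
  assert (Hx' : Rabs x <= M') by (unfold M'; pose proof (Rle_abs M); (cb; lra)).
  assert (Hy' : Rabs y <= M') by (unfold M'; pose proof (Rle_abs M); (cb; lra)).
  rewrite !F_con_eq by auto. fold q. fold s k.
  set (cx := eta + s * x). set (cy := eta + s * y).
  pose proof (H_lip q alpha beta cx cy Hq Hab) as HL. fold K0 in HL.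
  assert (Ecd : cy - cx = s * (y - x)) by (unfold cx, cy; ring).
  rewrite Ecd, Rabs_mult in HL.
  assert (Hcx : Rabs cx <= Rabs eta + Rabs s * M').
  { unfold cx. eapply Rle_trans; [apply Rabs_triang|]. rewrite Rabs_mult. (cb; nra). }
  assert (Hcy : Rabs cy <= Rabs eta + Rabs s * M').
  { unfold cy. eapply Rle_trans; [apply Rabs_triang|]. rewrite Rabs_mult. (cb; nra). }
  assert (Hyx : Rabs (y - x) <= 2 * M').
  { unfold Rminus. apply abs_sum_bound; auto. rewrite Rabs_Ropp; auto. }
  pose proof (Rabs_pos (y - x)).
  assert (HL2 : Rabs (Hv q alpha beta cy - Hv q alpha beta cx) <=
     Rabs (y - x) * (Rabs s * (6 * Rabs s * M' + 4 * Rabs eta + 2 * K0))).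
  { eapply Rle_trans; [exact HL|].
    assert (Rabs s * Rabs (y - x) <= Rabs s * (2 * M')) by (cb; nra).
    assert (0 <= Rabs s * Rabs (y - x)) by (cb; nra).
    assert (Rabs s * Rabs (y - x) + 2 * (Rabs cx + Rabs cy + K0) <= 6 * Rabs s * M' + 4 * Rabs eta + 2 * K0) by (cb; nra).
    (cb; nra). }
  change (/ 2 * (b / q)) with k.
  replace (- kappa * y + / 2 * sigma ^ 2 * y ^ 2 + k * Hv q alpha beta cy -
     (- kappa * x + / 2 * sigma ^ 2 * x ^ 2 + k * Hv q alpha beta cx))
   with ((y - x) * (- kappa + / 2 * sigma ^ 2 * (x + y)) + k * (Hv q alpha beta cy - Hv q alpha beta cx)) by ring.
  eapply Rle_trans; [apply Rabs_triang|]. rewrite !Rabs_mult.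
  assert (Rabs (- kappa + / 2 * sigma ^ 2 * (x + y)) <= Rabs kappa + sigma ^ 2 * M').
  { eapply Rle_trans; [apply Rabs_triang|]. rewrite Rabs_Ropp, !Rabs_mult.
    rewrite (Rabs_pos_eq (/2)) by (cb; lra). rewrite (Rabs_pos_eq (sigma ^ 2)) by (cb; nra).
    pose proof (abs_sum_bound x y M' Hx' Hy'). assert (0 <= sigma ^2) by (cb; nra). (cb; nra). }
  assert (Rabs (y - x) * Rabs (- kappa + / 2 * sigma ^ 2 * (x + y)) <= Rabs (y - x) * (Rabs kappa + sigma ^ 2 * M')).
  { apply Rmult_le_compat_l; auto. }
  assert (Rabs k * Rabs (Hv q alpha beta cy - Hv q alpha beta cx) <=
     Rabs k * (Rabs (y - x) * (Rabs s * (6 * Rabs s * M' + 4 * Rabs eta + 2 * K0)))).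
  { apply Rmult_le_compat_l; auto. }
  (cb; nra).
Qed.

Lemma decr_on (B G : R -> R) T tau :
  (forall t, 0 <= t <= T -> is_derive B t (G t)) -> (forall t, 0 <= t <= T -> G t <= 0) ->
  0 <= tau <= T -> B tau <= B 0.
Proof.
  intros HB HG Ht.
  destruct (Rle_lt_or_eq_dec 0 tau (proj1 Ht)) as [h|h]; [|subst; (cb; lra)].
  destruct (MVT_gen B 0 tau G) as [c [Hc Heq]].
  - rewrite Rmin_left, Rmax_right by (cb; lra). intros x Hx. apply HB. (cb; lra).
  - rewrite Rmin_left, Rmax_right by (cb; lra). intros x Hx. eapply deriv_cont. apply HB. (cb; lra).
  - rewrite Rmin_left, Rmax_right in Hc by (cb; lra).
    assert (G c <= 0) by (apply HG; (cb; lra)). (cb; nra).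
Qed.


Lemma Fcon0_i eta kappa sigma rho b alpha beta a : b < 1 -> 0 < eta -> Rbar_lt alpha beta ->
  alpha = Finite a -> (1 - b) * a = 2 * eta -> F_con eta kappa sigma rho b alpha beta 0 = 0.
Proof.
  intros Hb Heta Hab Ha Hqa. rewrite F_con_eq by auto.
  assert (E : P (1 - b) alpha beta (eta + sigma * rho * 0) = 2 * eta).
  { unfold P. rewrite Ha. replace (eta + sigma * rho * 0) with eta by ring.
    destruct (Rbar_lt_dec (Finite (eta / (1 - b))) (Finite a)) as [h|h].
    - simpl. lra.
    - exfalso. apply h. simpl. apply Rmult_lt_reg_l with (r := 1 - b); [lra|].
      field_simplify; lra. }
  unfold Hv. rewrite E. ring.
Qed.

Lemma Fcon0_ii eta kappa sigma rho b alpha beta bb : b < 1 -> 0 < eta -> Rbar_lt alpha beta ->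
  beta = Finite bb -> 0 < bb -> (1 - b) * bb < eta ->
  F_con eta kappa sigma rho b alpha beta 0 = b * (/ 2 * / (1 - b) * (2 * ((1 - b) * bb) * eta - ((1 - b) * bb)^2))
  /\ 0 < / 2 * / (1 - b) * (2 * ((1 - b) * bb) * eta - ((1 - b) * bb)^2).
Proof.
  intros Hb Heta Hab Hbb Hbb0 Hqb. assert (Hq : 0 < 1 - b) by lra.
  split.
  - rewrite F_con_eq by auto.
    replace (eta + sigma * rho * 0) with eta by ring.
    assert (E : P (1 - b) alpha beta eta = (1 - b) * bb).
    { destruct (P_cases (1 - b) alpha beta eta Hq Hab) as [[a [h1 [h2 h3]]]|[[bb' [h1 [h2 h3]]]|[h1 [h2 h3]]]].
      - exfalso. rewrite h1, Hbb in Hab. simpl in Hab. nra.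
      - rewrite Hbb in h1. injection h1 as ->. auto.
      - exfalso. rewrite Hbb in h2. simpl in h2.
        apply Rmult_le_compat_l with (r := 1 - b) in h2; [|lra]. field_simplify in h2; lra. }
    unfold Hv. rewrite E. field. lra.
  - assert (0 < 2 * ((1 - b) * bb) * eta - ((1 - b) * bb)^2).
    { assert (0 < (1 - b) * bb) by nra. nra. }
    assert (0 < / (1 - b)) by (apply Rinv_0_lt_compat; lra). nra.
Qed.

Lemma sign_same x y : 0 < x * y -> sign x = sign y.
Proof.
  intros h. destruct (Rlt_le_dec 0 x).
  - rewrite !sign_eq_1; auto. nra.
  - assert (x < 0) by (destruct (Rle_lt_or_eq_dec x 0 r); auto; subst; lra).
    rewrite !sign_eq_m1; auto. nra.
Qed.

Lemma deriv_pi (B G : R -> R) T eta sigma rho b t :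
  is_derive B (T - t) (G (T - t)) ->
  Derive (fun t => / (1 - b) * (eta + sigma * rho * B (T - t))) t
  = / (1 - b) * (sigma * rho * (- G (T - t))).
Proof.
  intros HB. apply is_derive_unique.
  assert (Hex : ex_derive B (T - t)) by (exists (G (T - t)); auto).
  auto_derive; auto.
  replace (T + - t) with (T - t) by ring.
  replace (Derive (fun x : R => B x) (T - t)) with (G (T - t)) by (symmetry; apply is_derive_unique; exact HB).
  ring.
Qed.


Theorem corollary2p11
  (T eta kappa sigma rho b : R) (alpha beta : Rbar) (B Bu : R -> R)
  (HT : 0 < T) (Heta : 0 < eta) (Hkappa : 0 < kappa) (Hsigma : 0 < sigma)
  (Hrho : -1 < rho < 1) (Hb1 : b < 1) (Hb0 : b <> 0)
  (Hab : Rbar_lt alpha beta)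
  (HB0 : B 0 = 0)
  (HB : forall tau, 0 <= tau <= T ->
          is_derive B tau (F_con eta kappa sigma rho b alpha beta (B tau)))
  (HBu0 : Bu 0 = 0)
  (HBu : forall tau, 0 <= tau <= T ->
          is_derive Bu tau (F_unc eta kappa sigma rho b (Bu tau))) :
  (* (i) *)
  ((0 < pi_M eta b /\
    Finite (pi_M eta b) = Rbar_mult alpha (Finite (/ 2)) /\
    Rbar_lt (Finite (pi_M eta b)) alpha /\
    (exists tstar, 0 <= tstar <= T /\
       Rbar_lt alpha (Finite (pi_u T eta sigma rho b Bu tstar)) /\
       Rbar_lt (Finite (pi_u T eta sigma rho b Bu tstar)) beta)) ->
   (forall tau, 0 <= tau <= T -> B tau = 0) /\
   (forall t, 0 <= t <= T -> Finite (pi_star T eta sigma rho b alpha beta B t) = alpha) /\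
   ~ (forall t, 0 <= t <= T ->
        Finite (pi_star T eta sigma rho b alpha beta B t)
        = Cap (pi_u T eta sigma rho b Bu t) alpha beta))
  /\
  (* (ii) *)
  ((Rbar_lt beta (Finite (pi_M eta b)) /\ Rbar_lt (Finite 0) beta) ->
   (forall t, 0 <= t <= T ->
      sign (Derive (pi_hat T eta sigma rho b B) t) = - sign (rho * b) /\
      sign (Derive (pi_u T eta sigma rho b Bu) t) = - sign (rho * b)) /\
   (b < 0 -> rho < 0 ->
      forall t, 0 <= t <= T ->
        Finite (pi_star T eta sigma rho b alpha beta B t)
        = Cap (pi_u T eta sigma rho b Bu t) alpha beta)).
Proof.
  assert (Hq : 0 < 1 - b) by lra.
  assert (HT0 : 0 <= T) by lra.
  pose proof (loclip_con eta kappa sigma rho b alpha beta Hb1 Hab) as LC.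
  pose proof (loclip_unc eta kappa sigma rho b) as LU.
  split.
  - intros [HpiM [Hhalf [Hlt [tstar [Hts [Hu1 Hu2]]]]]].
    destruct alpha as [a| |].
    2:{ rewrite Rbar_mult_pinf_pos in Hhalf by lra. discriminate. }
    2:{ rewrite Rbar_mult_minf_pos in Hhalf by lra. discriminate. }
    simpl in Hhalf. injection Hhalf as Hhalf. unfold pi_M in Hhalf.
    assert (Hqa : (1 - b) * a = 2 * eta).
    { assert (a = 2 * (eta / (1 - b))) by lra. subst a. field. lra. }
    assert (HF0 := Fcon0_i eta kappa sigma rho b (Finite a) beta a Hb1 Heta Hab eq_refl Hqa).
    assert (HBz : forall tau, 0 <= tau <= T -> B tau = 0).
    { apply (gronwall B _ T 0 0 HT0 LC HB ltac:(lra) HB0 HF0). }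
    assert (Hps : forall t, 0 <= t <= T -> Finite (pi_star T eta sigma rho b (Finite a) beta B t) = Finite a).
    { intros t Ht. unfold pi_star, lambda_star. rewrite (HBz (T - t)) by lra.
      unfold Bminus. simpl Rbar_mult. simpl Rbar_minus. simpl Rbar_mult.
      destruct (Rbar_lt_dec (Finite (rho * 0)) (Finite (/ sigma * ((1 - b) * a + - eta)))) as [h|h].
      - simpl. f_equal. field. lra.
      - exfalso. apply h. simpl. replace (rho * 0) with 0 by ring.
        apply Rmult_lt_0_compat. apply Rinv_0_lt_compat; lra. lra. }
    split; [exact HBz|]. split; [exact Hps|].
    intros Hall. specialize (Hall tstar Hts). rewrite Hps in Hall by auto.
    unfold Cap in Hall.
    destruct (Rbar_lt_dec (Finite (pi_u T eta sigma rho b Bu tstar)) (Finite a)) as [h|h].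
    + simpl in h, Hu1. lra.
    + destruct (Rbar_lt_dec beta (Finite (pi_u T eta sigma rho b Bu tstar))) as [h'|h'].
      * destruct beta; simpl in h', Hu2; lra.
      * injection Hall as Hall. simpl in Hu1. lra.
  - intros [HbM Hb0'].
    destruct beta as [bb| |].
    2:{ simpl in HbM. tauto. }
    2:{ destruct alpha; simpl in Hab; tauto. }
    simpl in HbM, Hb0'. unfold pi_M in HbM.
    assert (Hqb : (1 - b) * bb < eta).
    { apply Rmult_lt_compat_l with (r := 1 - b) in HbM; auto. field_simplify in HbM; lra. }
    destruct (Fcon0_ii eta kappa sigma rho b alpha (Finite bb) bb Hb1 Heta Hab eq_refl Hb0' Hqb)
      as [HF0 Hc0].
    set (c0 := / 2 * / (1 - b) * (2 * ((1 - b) * bb) * eta - ((1 - b) * bb) ^ 2)) in *. clearbody c0.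
    assert (HF0nz : F_con eta kappa sigma rho b alpha (Finite bb) 0 <> 0).
    { rewrite HF0. apply Rmult_integral_contrapositive; split; auto. lra. }
    pose proof (sign_keep B _ T HT0 LC HB HB0 HF0nz) as SK.
    assert (HU0 : F_unc eta kappa sigma rho b 0 = b * (eta ^ 2 / (2 * (1 - b)))).
    { unfold F_unc, r0. field. lra. }
    assert (Hcu : 0 < eta ^ 2 / (2 * (1 - b))).
    { apply Rdiv_lt_0_compat; nra. }
    assert (HU0nz : F_unc eta kappa sigma rho b 0 <> 0).
    { rewrite HU0. apply Rmult_integral_contrapositive; split; auto. lra. }
    pose proof (sign_keep Bu _ T HT0 LU HBu HBu0 HU0nz) as SKu.
    assert (sgF : forall tau, 0 <= tau <= T -> sign (F_con eta kappa sigma rho b alpha (Finite bb) (B tau)) = sign b).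
    { intros tau Htau. rewrite (sign_same _ _ (SK tau Htau)). rewrite HF0, sign_mult, (sign_eq_1 c0); auto. ring. }
    assert (sgU : forall tau, 0 <= tau <= T -> sign (F_unc eta kappa sigma rho b (Bu tau)) = sign b).
    { intros tau Htau. rewrite (sign_same _ _ (SKu tau Htau)). rewrite HU0, sign_mult, (sign_eq_1 (eta ^ 2 / (2 * (1 - b)))); auto. ring. }
    split.
    + intros t Ht. split.
      * unfold pi_hat.
        rewrite (deriv_pi B (fun tau => F_con eta kappa sigma rho b alpha (Finite bb) (B tau))) by (apply HB; lra).
        rewrite !sign_mult, sign_opp, sgF by lra.
        rewrite (sign_eq_1 (/ (1 - b))) by (apply Rinv_0_lt_compat; lra).
        rewrite (sign_eq_1 sigma) by lra. ring.
      * unfold pi_u.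
        rewrite (deriv_pi Bu (fun tau => F_unc eta kappa sigma rho b (Bu tau))) by (apply HBu; lra).
        rewrite !sign_mult, sign_opp, sgU by lra.
        rewrite (sign_eq_1 (/ (1 - b))) by (apply Rinv_0_lt_compat; lra).
        rewrite (sign_eq_1 sigma) by lra. ring.
    + intros Hbn Hrn t Ht.
      assert (Bneg : forall tau, 0 <= tau <= T -> B tau <= 0).
      { intros tau Htau. rewrite <- HB0. apply (decr_on B _ T tau HB); auto.
        intros s Hs. pose proof (SK s Hs). rewrite HF0 in *.
        assert (b * c0 < 0) by nra. nra. }
      assert (Buneg : forall tau, 0 <= tau <= T -> Bu tau <= 0).
      { intros tau Htau. rewrite <- HBu0. apply (decr_on Bu _ T tau HBu); auto.
        intros s Hs. pose proof (SKu s Hs). rewrite HU0 in *.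
        assert (b * (eta ^ 2 / (2 * (1 - b))) < 0) by nra. nra. }
      assert (HyB := Bneg (T - t) ltac:(lra)).
      assert (HyU := Buneg (T - t) ltac:(lra)).
      assert (Hpu : bb < pi_u T eta sigma rho b Bu t).
      { unfold pi_u.
        assert (0 <= rho * Bu (T - t)) by nra.
        assert (0 <= sigma * rho * Bu (T - t)) by (rewrite Rmult_assoc; apply Rmult_le_pos; lra).
        apply Rmult_lt_reg_l with (r := 1 - b); auto.
        rewrite <- Rmult_assoc, Rinv_r by lra. lra. }
      assert (HrB : 0 <= rho * B (T - t)) by nra.
      unfold pi_star, lambda_star, Cap.
      destruct (Rbar_lt_dec (Finite (rho * B (T - t))) (Bminus eta sigma b alpha)) as [h1|h1].
      { exfalso. unfold Bminus in h1. destruct alpha as [a| |].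
        - simpl in h1, Hab.
          assert (/ sigma * ((1 - b) * a + - eta) < 0).
          { assert (0 < / sigma) by (apply Rinv_0_lt_compat; lra).
            assert ((1 - b) * a < (1 - b) * bb) by (apply Rmult_lt_compat_l; lra).
            assert (E : / sigma * ((1 - b) * a + - eta) = - (/ sigma * (eta - (1 - b) * a))) by ring.
            rewrite E. assert (0 < / sigma * (eta - (1 - b) * a)) by (apply Rmult_lt_0_compat; lra). lra. }
          lra.
        - simpl in Hab; tauto.
        - rewrite Rbar_mult_pos_minf in h1 by lra. simpl in h1.
        - assert (0 < / sigma) by (apply Rinv_0_lt_compat; lra). revert h1. repeat match goal with |- context [Rle_dec ?x ?y] => destruct (Rle_dec x y) | |- context [Rle_lt_or_eq_dec ?x ?y ?z] => destruct (Rle_lt_or_eq_dec x y z) end; simpl; intros; try tauto; lra. }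
      destruct (Rbar_lt_dec (Bplus eta sigma b (Finite bb)) (Finite (rho * B (T - t)))) as [h2|h2].
      2:{ exfalso. apply h2. unfold Bplus. simpl.
          assert (/ sigma * ((1 - b) * bb + - eta) < 0).
          { assert (0 < / sigma) by (apply Rinv_0_lt_compat; lra).
            assert (E : / sigma * ((1 - b) * bb + - eta) = - (/ sigma * (eta - (1 - b) * bb))) by ring.
            rewrite E. assert (0 < / sigma * (eta - (1 - b) * bb)) by (apply Rmult_lt_0_compat; lra). lra. }
          lra. }
      destruct (Rbar_lt_dec (Finite (pi_u T eta sigma rho b Bu t)) alpha) as [h3|h3].
      { exfalso. destruct alpha as [a| |]; simpl in h3, Hab; lra || tauto. }
      destruct (Rbar_lt_dec (Finite bb) (Finite (pi_u T eta sigma rho b Bu t))) as [h4|h4].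
      2:{ exfalso. apply h4. simpl. lra. }
      simpl. f_equal. field. lra.
Qed.
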